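(* Let $n\ge4$, let $0<\alpha_2,\alpha_3<1$, $\alpha_1=1-\alpha_2-\alpha_3$, and $\lambda^*=\big(\frac{n-1+\alpha_1}{n},\frac{\alpha_2}{n},\frac{\alpha_3}{n}\big)$. Let $i=(i_1,i_2,i_3)\in I$ with $i_2\ge1$, $i_3\ge1$, $i_2+i_3\ge3$. Then (a) if $i_2\ge1$ and $i_3\ge2$, $$|l_i(\lambda^* )|\le\frac{1-\alpha_3}{e(\ln n-\ln2)}\cdot\frac{\Gamma(n+1)}{i_1!\,\Gamma(n-i_1)}\cdot\frac{\nu_2(i_2)}{i_2^{1+\alpha_2}\,i_3(i_3-1)};$$ (b) if $i_2\ge2$ and $i_3\ge1$, $$|l_i(\lambda^* )|\le\frac{1-\alpha_2}{e(\ln n-\ln2)}\cdot\frac{\Gamma(n+1)}{i_1!\,\Gamma(n-i_1)}\cdot\frac{\nu_3(i_3)}{i_3^{1+\alpha_3}\,i_2(i_2-1)}.$$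
   Context: For an integer $n\ge1$ let $I=\{i=(i_1,i_2,i_3)\in\mathbb{Z}_+^3: i_1+i_2+i_3=n\}$ and $l_i(\lambda)=\prod_{s=1}^{3}\frac{1}{i_s!}\prod_{t=0}^{i_s-1}(n\lambda_s-t)$ for $\lambda=(\lambda_1,\lambda_2,\lambda_3)$ (Lagrange fundamental polynomials for the equally spaced nodes $i/n$ of a triangle in barycentric coordinates). For $p=2,3$ and positive integers $s$: $\nu_p(1)=\alpha_p$ and $\nu_p(s)=\alpha_p(1-\alpha_p)2^{\alpha_p}$ for $s\ge2$. *)

(* Defs.v *)
From Stdlib Require Import Reals Lra Lia Arith Factorial.
Open Scope R_scope.

Fixpoint fallprod (y : R) (k : nat) : R :=
  match k with
  | O => 1
  | S k' => fallprod y k' * (y - INR k')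
  end.

(* one factor of the Lagrange fundamental polynomial:
   (1/k!) prod_{t=0}^{k-1} (n*x - t) *)
Definition lag_factor (n : nat) (x : R) (k : nat) : R :=
  / INR (fact k) * fallprod (INR n * x) k.

Definition lagr (n i1 i2 i3 : nat) (l1 l2 l3 : R) : R :=
  lag_factor n l1 i1 * lag_factor n l2 i2 * lag_factor n l3 i3.

Definition nu (alpha : R) (s : nat) : R :=
  if Nat.eqb s 1 then alpha else alpha * (1 - alpha) * Rpower 2 alpha.

(* Main.v *)
Require Import Defs.
From Stdlib Require Import Reals Factorial Lra Lia.
Open Scope R_scope.

Lemma exp_le x y : x <= y -> exp x <= exp y.
Proof. intros [H|H]; [left; now apply exp_increasing | subst; lra]. Qed.

Lemma ln_le' x y : 0 < x -> x <= y -> ln x <= ln y.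
Proof. intros Hx [H|H]; [left; now apply ln_increasing | subst; lra]. Qed.

Lemma ln_step t : 0 < t -> ln (t + 1) - ln t <= / t.
Proof.
  intros Ht.
  replace (t + 1) with (t * (1 + / t)) by (field; lra).
  rewrite ln_mult; [| lra | ].
  2:{ assert (0 < / t) by (apply Rinv_0_lt_compat; lra). lra. }
  assert (0 < / t) by (apply Rinv_0_lt_compat; lra).
  assert (ln (1 + / t) <= ln (exp (/ t))).
  { apply ln_le'; [lra | apply exp_ineq1_le]. }
  rewrite ln_exp in H0. lra.
Qed.

Fixpoint pr (al : R) (a k : nat) : R :=
  match k with O => 1 | S k' => pr al a k' * (1 - al / INR (a + k')) end.

Lemma pr_bound al a k : (1 <= a)%nat -> 0 <= al -> al <= INR a ->
  0 <= pr al a k <= exp (- al * (ln (INR (a + k)) - ln (INR a))).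
Proof.
  intros Ha H0 H1. induction k as [|k IH].
  - simpl. rewrite Nat.add_0_r. replace (- al * (ln (INR a) - ln (INR a))) with 0 by ring.
    rewrite exp_0; lra.
  - simpl pr. set (t := INR (a + k)).
    assert (Ht : INR a <= t) by (apply le_INR; lia).
    assert (Ha1 : 1 <= INR a) by (apply (le_INR 1); lia).
    assert (Hf0 : 0 <= 1 - al / t).
    { assert (al / t <= 1). { apply (Rmult_le_reg_r t); [lra|]. unfold Rdiv. rewrite Rmult_assoc, Rinv_l; lra. }
      lra. }
    assert (Hf1 : 1 - al / t <= exp (- al * / t)).
    { pose proof (exp_ineq1_le (- al * / t)). unfold Rdiv in *. lra. }
    assert (Hs : INR (a + S k) = t + 1) by (unfold t; rewrite Nat.add_succ_r, S_INR; reflexivity).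
    rewrite Hs.
    pose proof (ln_step t ltac:(lra)) as Hl.
    assert (Hex : exp (- al * (ln t - ln (INR a))) * exp (- al * / t) <=
                  exp (- al * (ln (t + 1) - ln (INR a)))).
    { rewrite <- exp_plus. apply exp_le. 
      assert (al * (ln (t+1) - ln t) <= al * / t) by (apply Rmult_le_compat_l; lra).
      nra. }
    destruct IH as [IH1 IH2]. split.
    + apply Rmult_le_pos; lra.
    + eapply Rle_trans; [| exact Hex].
      apply Rmult_le_compat; try lra. exact IH2.
Qed.

Lemma fall_small al k : 0 < al < 1 ->
  Rabs (fallprod al (S k)) = al * INR (fact k) * pr al 1 k.
Proof.
  intros H. induction k as [|k IH].
  - simpl. rewrite Rabs_right; lra.
  - change (fallprod al (S (S k))) with (fallprod al (S k) * (al - INR (S k))).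
    rewrite Rabs_mult, IH.
    assert (1 <= INR (S k)) by (apply (le_INR 1); lia).
    rewrite (Rabs_left1 (al - _)) by lra.
    change (pr al 1 (S k)) with (pr al 1 k * (1 - al / INR (1 + k))).
    change (fact (S k)) with (S k * fact k)%nat. rewrite mult_INR.
    replace (1 + k)%nat with (S k) by lia. field. lra.
Qed.

Lemma pr_split al a k : pr al a (S k) = (1 - al / INR a) * pr al (S a) k.
Proof.
  induction k as [|k IH].
  - simpl. rewrite Nat.add_0_r. ring.
  - change (pr al a (S (S k))) with (pr al a (S k) * (1 - al / INR (a + S k))).
    rewrite IH. change (pr al (S a) (S k)) with (pr al (S a) k * (1 - al / INR (S a + k))). replace (a + S k)%nat with (S a + k)%nat by lia. ring.
Qed.

Lemma fall_shift y k : fallprod y (S k) = y * fallprod (y - 1) k.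
Proof.
  induction k as [|k IH].
  - simpl. ring.
  - change (fallprod y (S (S k))) with (fallprod y (S k) * (y - INR (S k))).
    rewrite IH. simpl fallprod. rewrite S_INR. ring.
Qed.

Lemma fall_big m k s :
  fallprod (INR (m + k) - s) k = INR (fact (m + k)) / INR (fact m) * pr s (S m) k.
Proof.
  assert (0 < INR (fact m)) by (apply lt_0_INR, lt_O_fact).
  induction k as [|k IH].
  - simpl. rewrite Nat.add_0_r. field. lra.
  - rewrite fall_shift.
    replace (INR (m + S k) - s - 1) with (INR (m + k) - s)
      by (rewrite Nat.add_succ_r, S_INR; ring).
    rewrite IH. change (pr s (S m) (S k)) with (pr s (S m) k * (1 - s / INR (S m + k))). replace (S m + k)%nat with (m + S k)%nat by lia.
    rewrite Nat.add_succ_r. change (fact (S (m + k))) with (S (m + k) * fact (m + k))%nat.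
    rewrite mult_INR.
    assert (0 < INR (S (m + k))) by (apply lt_0_INR; lia).
    field. lra.
Qed.

Lemma keyK a L : 0 < L -> 0 <= a -> a * exp (- a * L) <= / (exp 1 * L).
Proof.
  intros HL Ha.
  pose proof (exp_ineq1_le (a * L - 1)) as H1.
  assert (He : exp (a * L) = exp (a * L - 1) * exp 1) by (rewrite <- exp_plus; f_equal; ring).
  replace (- a * L) with (- (a * L)) by ring. rewrite exp_Ropp.
  pose proof (exp_pos (a * L)). pose proof (exp_pos 1).
  apply (Rmult_le_reg_r (exp (a * L) * (exp 1 * L))).
  { apply Rmult_lt_0_compat; [lra| apply Rmult_lt_0_compat; lra]. }
  replace (a * / exp (a * L) * (exp (a * L) * (exp 1 * L))) with (a * L * exp 1) by (field; lra).
  replace (/ (exp 1 * L) * (exp (a * L) * (exp 1 * L))) with (exp (a * L)) by (field; lra).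
  rewrite He. apply Rmult_le_compat_r; lra.
Qed.
Lemma partA b j : 0 < b < 1 -> (1 <= j)%nat ->
  b / INR j * pr b 1 (j - 1) <= nu b j / Rpower (INR j) (1 + b).
Proof.
  intros Hb Hj.
  destruct j as [|j]; [lia|]. destruct j as [|j].
  - simpl. unfold nu. simpl. unfold Rpower. rewrite ln_1. rewrite Rmult_0_r, exp_0. lra.
  - replace (S (S j) - 1)%nat with (S j) by lia.
    rewrite pr_split. 
    assert (Hj2 : INR (S (S j)) = INR (2 + j)) by (f_equal; lia).
    pose proof (pr_bound b 2 j ltac:(lia) ltac:(lra) ltac:(simpl; lra)) as [P0 P1].
    unfold nu. simpl Nat.eqb. cbv iota.
    rewrite Rpower_plus, Rpower_1 by (apply lt_0_INR; lia).
    assert (H2 : INR 2 = 2) by (simpl; ring). rewrite H2 in P1.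
    rewrite <- Hj2 in P1.
    set (J := INR (S (S j))) in *.
    assert (HJ : 2 <= J) by (rewrite Hj2, plus_INR, H2; pose proof (pos_INR j); lra).
    unfold Rpower.
    assert (Ee : exp (- b * (ln J - ln 2)) = exp (b * ln 2) / exp (b * ln J)).
    { unfold Rdiv. rewrite <- exp_Ropp, <- exp_plus. f_equal; ring. }
    rewrite Ee in P1. simpl (INR 1). replace (1 - b / 1) with (1 - b) by field.
    pose proof (exp_pos (b * ln J)). pose proof (exp_pos (b * ln 2)).
    apply Rle_trans with (b / J * ((1 - b) * (exp (b * ln 2) / exp (b * ln J)))).
      { apply Rmult_le_compat_l. { apply Rmult_le_pos; [lra|]. left; apply Rinv_0_lt_compat; lra. }
      apply Rmult_le_compat_l; lra. }
      right. field. lra.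
Qed.
Lemma partB c k m n : 0 < c < 1 -> (2 <= k)%nat -> (k + 1 <= m)%nat -> (m <= n)%nat -> (4 <= n)%nat ->
  / INR m * exp (- c * (ln (INR (n + 1)) - ln (INR (m + 1)))) * (c / INR k) *
    exp (- c * (ln (INR k) - ln 2))
  <= / (exp 1 * (ln (INR n) - ln 2)) / (INR k * (INR k - 1)).
Proof.
  intros Hc Hk Hkm Hmn Hn.
  rewrite !plus_INR. simpl (INR 1).
  assert (HK : 2 <= INR k) by (apply (le_INR 2); lia).
  assert (HM : INR k + 1 <= INR m) by (rewrite <- (S_INR k); apply le_INR; lia).
  assert (HN : INR m <= INR n) by (apply le_INR; lia).
  assert (HN4 : 4 <= INR n) by (replace 4 with (INR 4) by (simpl; ring); apply le_INR; lia).
  set (K := INR k) in *. set (M := INR m) in *. set (N := INR n) in *.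
  assert (HLn : 0 < ln N - ln 2) by (pose proof (ln_increasing 2 N ltac:(lra) ltac:(lra)); lra).
  set (Ln := ln N - ln 2) in *.
  assert (S1a : (K - 1) / M <= K / (M + 1)).
  { apply (Rmult_le_reg_r (M * (M + 1))). nra.
    replace ((K - 1) / M * (M * (M + 1))) with ((K - 1) * (M + 1)) by (field; lra).
    replace (K / (M + 1) * (M * (M + 1))) with (K * M) by (field; lra). nra. }
  assert (S1b : K / (M + 1) = exp (ln K - ln (M + 1))).
  { unfold Rminus. rewrite exp_plus, <- ln_Rinv, !exp_ln by (try apply Rinv_0_lt_compat; lra). reflexivity. }
  assert (Hlk : ln K <= ln (M + 1)) by (apply ln_le'; lra).
  assert (S1 : (K - 1) / M <= exp (- c * (ln (M + 1) - ln K))).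
  { eapply Rle_trans; [exact S1a|]. rewrite S1b. apply exp_le. nra. }
  assert (Hln : ln N <= ln (N + 1)) by (apply ln_le'; lra).
  pose proof (exp_pos (- c * (ln (N + 1) - ln (M + 1)))) as E1.
  pose proof (exp_pos (- c * (ln K - ln 2))) as E2.
  pose proof (exp_pos (- c * (ln (M + 1) - ln K))) as E3.
  apply Rle_trans with (c / (K * (K - 1)) * (exp (- c * (ln (M + 1) - ln K)) *
     exp (- c * (ln (N + 1) - ln (M + 1))) * exp (- c * (ln K - ln 2)))).
  { replace (/ M * exp (- c * (ln (N + 1) - ln (M + 1))) * (c / K) * exp (- c * (ln K - ln 2)))
      with (c / (K * (K - 1)) * ((K - 1) / M *
     exp (- c * (ln (N + 1) - ln (M + 1))) * exp (- c * (ln K - ln 2)))) by (field; lra).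
    apply Rmult_le_compat_l. { apply Rmult_le_pos; [lra|]. left; apply Rinv_0_lt_compat; nra. }
    apply Rmult_le_compat_r; [lra|]. apply Rmult_le_compat_r; [lra|]. exact S1. }
  rewrite <- !exp_plus.
  apply Rle_trans with (c / (K * (K - 1)) * exp (- c * Ln)).
  { apply Rmult_le_compat_l. { apply Rmult_le_pos; [lra|]. left; apply Rinv_0_lt_compat; nra. }
    apply exp_le. unfold Ln. nra. }
  pose proof (keyK c Ln HLn ltac:(lra)).
  replace (c / (K * (K - 1)) * exp (- c * Ln)) with (c * exp (- c * Ln) / (K * (K - 1))) by (field; lra).
  unfold Rdiv. apply Rmult_le_compat_r; [left; apply Rinv_0_lt_compat; nra | exact H].
Qed.
Lemma core n i1 j k b c : (4 <= n)%nat -> 0 < b < 1 -> 0 < c < 1 ->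
  (i1 + j + k = n)%nat -> (1 <= j)%nat -> (2 <= k)%nat ->
  Rabs (lag_factor n ((INR n - 1 + (1 - b - c)) / INR n) i1 *
        lag_factor n (b / INR n) j * lag_factor n (c / INR n) k)
  <= (1 - c) / (exp 1 * (ln (INR n) - ln 2)) *
     (INR (fact n) / (INR (fact i1) * INR (fact (n - i1 - 1)))) *
     (nu b j / (Rpower (INR j) (1 + b) * (INR k * (INR k - 1)))).
Proof.
  intros Hn Hb Hc Hsum Hj Hk.
  assert (HnR : 0 < INR n) by (apply lt_0_INR; lia).
  pose proof (partA b j Hb Hj) as PA.
  pose proof (partB c k (j + k) n Hc Hk ltac:(lia) ltac:(lia) Hn) as PB.
  assert (H2 : c <= INR 2) by (simpl; lra).
  assert (Pc := pr_bound c 2 (k - 2) ltac:(lia) ltac:(lra) H2).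
  assert (Hbc0 : 0 <= b + c) by lra.
  assert (Hbc1 : b + c <= INR (S (j + k))) by (rewrite S_INR; assert (1 <= INR (j+k)) by (apply (le_INR 1); lia); lra).
  assert (Pbc := pr_bound (b + c) (S (j + k)) i1 ltac:(lia) Hbc0 Hbc1).
  assert (H1 : b <= INR 1) by (simpl; lra).
  assert (Pb := pr_bound b 1 (j - 1) ltac:(lia) ltac:(lra) H1).
  unfold lag_factor.
  replace (INR n * ((INR n - 1 + (1 - b - c)) / INR n)) with (INR (j + k + i1) - (b + c))
    by (replace (j + k + i1)%nat with n by lia; field; lra).
  replace (INR n * (b / INR n)) with b by (field; lra).
  replace (INR n * (c / INR n)) with c by (field; lra).
  rewrite fall_big.
  replace (j + k + i1)%nat with n by lia.
  destruct j as [|j']; [lia|]. destruct k as [|[|k']]; try lia.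
  assert (F1 : 0 < INR (fact i1)) by (apply lt_0_INR, lt_O_fact).
  assert (F2 : 0 < INR (fact (S j'))) by (apply lt_0_INR, lt_O_fact).
  assert (F3 : 0 < INR (fact (S (S k')))) by (apply lt_0_INR, lt_O_fact).
  assert (F4 : 0 < INR (fact (S j' + S (S k')))) by (apply lt_0_INR, lt_O_fact).
  assert (F5 : 0 < INR (fact n)) by (apply lt_0_INR, lt_O_fact).
  rewrite Rabs_mult, Rabs_mult, (Rabs_mult (/ INR (fact (S j')))), (Rabs_mult (/ INR (fact (S (S k'))))).
  rewrite (Rabs_pos_eq (/ INR (fact i1) * _)).
  2:{ apply Rmult_le_pos; [left; apply Rinv_0_lt_compat; lra|]. apply Rmult_le_pos; [|lra].
      unfold Rdiv; apply Rmult_le_pos; [lra|left; apply Rinv_0_lt_compat; lra]. }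
  rewrite (Rabs_pos_eq (/ INR (fact (S j')))) by (left; apply Rinv_0_lt_compat; lra).
  rewrite (Rabs_pos_eq (/ INR (fact (S (S k'))))) by (left; apply Rinv_0_lt_compat; lra).
  clear F1 F2 F3 F4 F5.
  rewrite (fall_small b j' Hb), (fall_small c (S k') Hc), pr_split.
  replace (S j' - 1)%nat with j' in * by lia.
  replace (S (S k') - 2)%nat with k' in * by lia.
  replace (n - i1 - 1)%nat with (j' + S (S k'))%nat by lia.
  replace (2 + k')%nat with (S (S k')) in Pc by lia.
  replace (S (S j' + S (S k')) + i1)%nat with (n + 1)%nat in Pbc by lia.
  replace (S (S j' + S (S k'))) with (S j' + S (S k') + 1)%nat in Pbc |- * by lia.
  change (fact (S j')) with (S j' * fact j')%nat.
  change (fact (S (S k'))) with (S (S k') * fact (S k'))%nat.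
  change (fact (S j' + S (S k'))) with (S (j' + S (S k')) * fact (j' + S (S k')))%nat.
  rewrite !mult_INR.
  replace (INR (S (j' + S (S k')))) with (INR (S j' + S (S k'))) by (f_equal; lia).
  simpl (INR 1) in *. simpl (INR 2) in Pc. replace (1 + 1) with 2 in Pc by ring.
  set (J := INR (S j')) in *. set (K := INR (S (S k'))) in *. set (M := INR (S j' + S (S k'))) in *.
  set (P1 := pr (b + c) (S j' + S (S k') + 1) i1) in *.
  set (P2 := pr b 1 j') in *. set (P3 := pr c 2 k') in *.
  assert (HJ : 1 <= J) by (unfold J; rewrite S_INR; pose proof (pos_INR j'); lra).
  assert (HK : 2 <= K) by (unfold K; rewrite !S_INR; pose proof (pos_INR k'); lra).
  assert (HM : 0 < M) by (unfold M; apply lt_0_INR; lia).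
  assert (F1 : 0 < INR (fact i1)) by (apply lt_0_INR, lt_O_fact).
  assert (F2 : 0 < INR (fact j')) by (apply lt_0_INR, lt_O_fact).
  assert (F3 : 0 < INR (fact (S k'))) by (apply lt_0_INR, lt_O_fact).
  assert (F4 : 0 < INR (fact (j' + S (S k')))) by (apply lt_0_INR, lt_O_fact).
  assert (F5 : 0 < INR (fact n)) by (apply lt_0_INR, lt_O_fact).
  set (fn := INR (fact n)) in *. set (fm := INR (fact (j' + S (S k')))) in *.
  set (fi := INR (fact i1)) in *. set (fj := INR (fact j')) in *. set (fk := INR (fact (S k'))) in *.
  set (X := ln (INR (n + 1)) - ln (INR (S j' + S (S k') + 1))) in *.
  assert (HX : 0 <= X).
  { unfold X. assert (INR (S j' + S (S k') + 1) <= INR (n + 1)) by (apply le_INR; lia).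
    assert (0 < INR (S j' + S (S k') + 1)) by (apply lt_0_INR; lia).
    pose proof (ln_le' _ _ H0 H). lra. }
  assert (P1b : P1 <= exp (- c * X)).
  { eapply Rle_trans; [apply Pbc|]. apply exp_le. nra. }
  assert (HLn : 0 < ln (INR n) - ln 2).
  { assert (4 <= INR n) by (replace 4 with (INR 4) by (simpl; ring); apply le_INR; lia).
    pose proof (ln_increasing 2 (INR n) ltac:(lra) ltac:(lra)); lra. }
  set (Ln := ln (INR n) - ln 2) in *.
  assert (HR : 0 < Rpower J (1 + b)) by (unfold Rpower; apply exp_pos).
  pose proof (exp_pos 1) as He.
  pose proof (exp_pos (- c * X)) as E1.
  replace (/ fi * (fn / (M * fm) * P1) * (/ (J * fj) * (b * fj * P2)) *
     (/ (K * fk) * (c * fk * ((1 - c / 1) * P3))))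
    with ((fn / (fi * fm)) * ((1 - c) * ((/ M * P1 * (c / K) * P3) * (b / J * P2))))
    by (field; repeat split; lra).
  replace ((1 - c) / (exp 1 * Ln) * (fn / (fi * fm)) *
      (nu b (S j') / (Rpower J (1 + b) * (K * (K - 1)))))
    with ((fn / (fi * fm)) * ((1 - c) * ((/ (exp 1 * Ln) / (K * (K - 1))) * (nu b (S j') / Rpower J (1 + b)))))
    by (field; repeat split; try lra; nra).
  assert (Hf : 0 <= fn / (fi * fm)).
  { unfold Rdiv. apply Rmult_le_pos; [lra|]. left; apply Rinv_0_lt_compat; nra. }
  apply Rmult_le_compat_l; [exact Hf|].
  apply Rmult_le_compat_l; [lra|].
  assert (HiM : 0 < / M) by (apply Rinv_0_lt_compat; lra).
  assert (HcK : 0 < c / K) by (unfold Rdiv; apply Rmult_lt_0_compat; [lra| apply Rinv_0_lt_compat; lra]).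
  assert (HbJ : 0 < b / J) by (unfold Rdiv; apply Rmult_lt_0_compat; [lra| apply Rinv_0_lt_compat; lra]).
  apply Rmult_le_compat.
  - apply Rmult_le_pos; [|lra]. apply Rmult_le_pos; [|lra]. apply Rmult_le_pos; lra.
  - apply Rmult_le_pos; lra.
  - eapply Rle_trans; [|exact PB].
    apply Rmult_le_compat; try lra.
    + apply Rmult_le_pos; [|lra]. apply Rmult_le_pos; lra.
    + apply Rmult_le_compat_r; [lra|]. apply Rmult_le_compat_l; lra.
  - exact PA.
Qed.

Theorem lemma20 (n i1 i2 i3 : nat) (a2 a3 : R) :
  (4 <= n)%nat ->
  0 < a2 < 1 -> 0 < a3 < 1 ->
  (i1 + i2 + i3 = n)%nat ->
  (1 <= i2)%nat -> (1 <= i3)%nat -> (3 <= i2 + i3)%nat ->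
  let a1 := 1 - a2 - a3 in
  let L := lagr n i1 i2 i3 ((INR n - 1 + a1) / INR n) (a2 / INR n) (a3 / INR n) in
  let G := INR (fact n) / (INR (fact i1) * INR (fact (n - i1 - 1))) in
  ((1 <= i2)%nat -> (2 <= i3)%nat ->
     Rabs L <= (1 - a3) / (exp 1 * (ln (INR n) - ln 2)) * G *
               (nu a2 i2 / (Rpower (INR i2) (1 + a2) * (INR i3 * (INR i3 - 1)))))
  /\
  ((2 <= i2)%nat -> (1 <= i3)%nat ->
     Rabs L <= (1 - a2) / (exp 1 * (ln (INR n) - ln 2)) * G *
               (nu a3 i3 / (Rpower (INR i3) (1 + a3) * (INR i2 * (INR i2 - 1))))).
Proof.
  intros Hn H2 H3 Hs Hi2 Hi3 Hi23 a1 L G. unfold L, G, a1, lagr. split.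
  - intros _ Hk. apply core; auto.
  - intros Hk _.
    replace (1 - a2 - a3) with (1 - a3 - a2) by ring.
    match goal with |- Rabs (?A * ?B * ?C) <= _ => replace (A * B * C) with (A * C * B) by ring end.
    apply core; auto. lia.
Qed.
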